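(* Let $A$ be a commutative ring, $r,d\ge1$, $B=A[x_1,\dots,x_r]$, let $k\ge1$ and $\alpha\in\mathbb{N}^r\setminus\{0\}$ with $\gcd(\alpha)$ invertible in $A$. If $k|\alpha|\le d$, then $\gamma^k(x^\alpha)\times\gamma^{d-k}(1)\notin\Gamma^d_A(B)_{<k\alpha}$.
   Context: $\Gamma^d_A(B)$ is identified with $\mathrm{TS}^d_A(B)=(B^{\otimes_A d})^{\mathfrak S_d}$ (componentwise multiplication). For a monomial $f$, $\gamma^k(f)\times\gamma^{d-k}(1)=\sum_{S\subseteq\{1..d\},|S|=k}\bigotimes_{j}f_j$ with $f_j=f$ for $j\in S$, $f_j=1$ otherwise. $B^{\otimes d}$ is $\mathbb{N}^r$-graded by giving $x^{\beta_1}\otimes\dots\otimes x^{\beta_d}$ multidegree $\beta_1+\dots+\beta_d$. $\beta<\gamma$ means $\beta\le\gamma$ componentwise and $\beta\neq\gamma$; $\Gamma^d_A(B)_{<\gamma}$ is the $A$-subalgebra generated by homogeneous elements of multidegree $<\gamma$. *)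

(* Defs.v *)
From HB Require Import structures.
From mathcomp Require Import all_boot all_order all_algebra all_fingroup.
From mathcomp Require Import mpoly.
Set Implicit Arguments. Unset Strict Implicit. Unset Printing Implicit Defensive.
Import GRing.Theory.
Local Open Scope ring_scope.

(* B^{(x)_A d} is modelled as the polynomial
   ring in the d*r variables x_{j,i} (j : 'I_d the tensor slot, i : 'I_r),
   i.e. x^{b_1} (x) ... (x) x^{b_d}  <->  prod_j prod_i x_{j,i}^{b_j i}. *)

Definition nvar (d r : nat) : nat := #|{: 'I_d * 'I_r}|.

Notation tensB A d r := {mpoly A[nvar d r]}.

(* the variable x_{j,i}, i.e. 1 (x) .. (x) x_i (x) .. (x) 1 (x_i in slot j) *)
Definition tvar (A : nzRingType) (d r : nat) (j : 'I_d) (i : 'I_r) : tensB A d r :=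
  'X_(enum_rank (j, i)).

Definition slot_perm (A : nzRingType) (d r : nat) (s : 'S_d) (p : tensB A d r)
  : tensB A d r :=
  mmap (@mpolyC _ A)
    (fun k : 'I_(nvar d r) => @tvar A d r (s (enum_val k).1) (enum_val k).2) p.

Definition symmetric_tensor (A : nzRingType) (d r : nat) (p : tensB A d r) : Prop :=
  forall s : 'S_d, slot_perm s p = p.

Definition tmdeg (d r : nat) (m : 'X_{1..nvar d r}) : 'X_{1..r} :=
  [multinom (\sum_(j < d) m (enum_rank (j, i)))%N | i < r].

Definition thomog (A : nzRingType) (d r : nat) (beta : 'X_{1..r}) (p : tensB A d r)
  : Prop :=
  forall m, m \in msupp p -> tmdeg m = beta.

Definition mlt (r : nat) (beta gamma : 'X_{1..r}) : bool :=
  [forall i, (beta i <= gamma i)%N] && (beta != gamma).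

Inductive subalg_gen (A : nzRingType) (n : nat) (S : {mpoly A[n]} -> Prop)
  : {mpoly A[n]} -> Prop :=
| sg_const (a : A) : subalg_gen S a%:MP
| sg_gen p : S p -> subalg_gen S p
| sg_add p q : subalg_gen S p -> subalg_gen S q -> subalg_gen S (p + q)
| sg_mul p q : subalg_gen S p -> subalg_gen S q -> subalg_gen S (p * q).

Definition Gamma_lt (A : nzRingType) (d r : nat) (gamma : 'X_{1..r})
  : tensB A d r -> Prop :=
  subalg_gen (fun p => symmetric_tensor p /\
                 exists beta, thomog beta p /\ mlt beta gamma).

Definition slot_mono (A : nzRingType) (d r : nat) (j : 'I_d) (alpha : 'X_{1..r})
  : tensB A d r :=
  \prod_(i < r) @tvar A d r j i ^+ alpha i.

Definition gamma_prod (A : nzRingType) (d r k : nat) (alpha : 'X_{1..r})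
  : tensB A d r :=
  \sum_(S : {set 'I_d} | #|S| == k) \prod_(j in S) @slot_mono A d r j alpha.

Definition mscale (r k : nat) (alpha : 'X_{1..r}) : 'X_{1..r} :=
  [multinom (k * alpha i)%N | i < r].

(* Main.v *)
Require Import Defs.
From HB Require Import structures.
From mathcomp Require Import all_boot all_order all_algebra all_fingroup.
From mathcomp Require Import mpoly.
From mathcomp Require Import zify ring.
Set Implicit Arguments. Unset Strict Implicit. Unset Printing Implicit Defensive.
Import GRing.Theory.
Local Open Scope ring_scope.
Section Slots.
Variables (n r : nat).
Local Notation d := n.+1.
Local Notation N := (nvar d r).

Definition sl (m : 'X_{1..N}) (j : 'I_d) : 'X_{1..r} :=
  [multinom m (enum_rank (j, i)) | i < r].

Definition mk (F : 'I_d -> 'X_{1..r}) : 'X_{1..N} :=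
  [multinom F (enum_val k).1 (enum_val k).2 | k < N].

Lemma sl_mk F j : sl (mk F) j = F j.
Proof. by apply/mnmP=> i; rewrite !mnmE enum_rankK. Qed.

Lemma sl_inj m1 m2 : (forall j, sl m1 j = sl m2 j) -> m1 = m2.
Proof.
move=> H; apply/mnmP=> k; have := H (enum_val k).1.
move/mnmP/(_ (enum_val k).2); rewrite !mnmE.
by rewrite -surjective_pairing enum_valK.
Qed.

Lemma mk_sl m : mk (sl m) = m.
Proof. by apply: sl_inj=> j; rewrite sl_mk. Qed.

Lemma slD m1 m2 j : sl (m1 + m2) j = (sl m1 j + sl m2 j)%MM.
Proof. by apply/mnmP=> i; rewrite !(mnmE, mnmDE). Qed.

Lemma sl0 j : sl 0%MM j = 0%MM.
Proof. by apply/mnmP=> i; rewrite !mnmE. Qed.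

Lemma sl_eq0 m : (forall j, sl m j = 0%MM) -> m = 0%MM.
Proof. by move=> H; apply: sl_inj=> j; rewrite H sl0. Qed.

Lemma tmdegE (m : 'X_{1..N}) : tmdeg m = (\sum_(j < d) sl m j)%MM.
Proof. by apply/mnmP=> i; rewrite mnmE mnm_sumE; apply: eq_bigr=> j _; rewrite mnmE. Qed.

Lemma mdeg_sl m : mdeg m = (\sum_(j < d) mdeg (sl m j))%N.
Proof.
rewrite mdegE (reindex (@enum_rank ('I_d * 'I_r)%type)) /=; last first.
  by exists enum_val=> x _; rewrite ?enum_rankK ?enum_valK.
transitivity (\sum_(p : 'I_d * 'I_r) m (enum_rank (p.1, p.2)))%N.
  by apply: eq_bigr=> -[].
rewrite -(pair_bigA _ (fun (j : 'I_d) (i : 'I_r) => m (enum_rank (j, i)))) /=.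
apply: eq_bigr=> j _; rewrite mdegE.
by apply: eq_bigr=> i _; rewrite mnmE.
Qed.

Lemma mdeg_tmdeg (m : 'X_{1..N}) : mdeg (tmdeg m) = mdeg m.
Proof. by rewrite tmdegE mdeg_sum mdeg_sl. Qed.

End Slots.
Section Perm.
Variables (A : comNzRingType) (n r : nat).
Local Notation d := n.+1.
Local Notation N := (nvar d r).

Definition pm (s : 'S_d) (m : 'X_{1..N}) : 'X_{1..N} := mk (fun j => sl m (s j)).

Lemma sl_pm s m j : sl (pm s m) j = sl m (s j).
Proof. by rewrite sl_mk. Qed.

Lemma pmE s m k : pm s m k = m (enum_rank (s (enum_val k).1, (enum_val k).2)).
Proof. by rewrite mnmE mnmE. Qed.

Lemma pmK s : cancel (pm s) (pm (s^-1)%g).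
Proof. by move=> m; apply: sl_inj=> j; rewrite !sl_pm permKV. Qed.

Lemma mdeg_pm s m : mdeg (pm s m) = mdeg m.
Proof.
rewrite [LHS](@mdeg_sl n) [RHS](@mdeg_sl n); rewrite [RHS](reindex_inj (@perm_inj _ s)) /=.
by apply: eq_bigr=> j _; rewrite sl_pm.
Qed.

Lemma tmdeg_pm s m : tmdeg (pm s m) = tmdeg m.
Proof.
rewrite !tmdegE [RHS](reindex_inj (@perm_inj _ s)) /=.
by apply: eq_bigr=> j _; rewrite sl_pm.
Qed.

Lemma pmD s m1 m2 : pm s (m1 + m2) = (pm s m1 + pm s m2)%MM.
Proof. by apply: sl_inj=> j; rewrite !(sl_pm, slD). Qed.

Lemma slot_permX (s : 'S_d) (m : 'X_{1..N}) :
  slot_perm s ('X_[m] : tensB A d r) = 'X_[pm (s^-1)%g m].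
Proof.
rewrite /slot_perm mmapX /mmap1 /tvar [RHS]mpolyXE_id.
pose sig (k : 'I_N) := enum_rank (s (enum_val k).1, (enum_val k).2).
pose tau (k : 'I_N) := enum_rank ((s^-1)%g (enum_val k).1, (enum_val k).2).
have sK : cancel sig tau.
  by move=> k; rewrite /sig /tau enum_rankK /= permK -surjective_pairing enum_valK.
rewrite [RHS](reindex_inj (can_inj sK)) /=; apply: eq_bigr=> k _.
rewrite pmE /sig enum_rankK /= permK -surjective_pairing enum_valK.
by [].
Qed.

Lemma slot_permD s (p q : tensB A d r) :
  slot_perm s (p + q) = slot_perm s p + slot_perm s q.
Proof. exact: mmapD. Qed.

Lemma slot_perm0 s : slot_perm s (0 : tensB A d r) = 0.
Proof. exact: mmap0. Qed.

Lemma slot_permM s (p q : tensB A d r) :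
  slot_perm s (p * q) = slot_perm s p * slot_perm s q.
Proof. exact: (mmap_is_multiplicative _ _).1. Qed.

Lemma slot_permC s (a : A) : slot_perm s (a%:MP : tensB A d r) = a%:MP.
Proof. exact: mmapC. Qed.

Lemma slot_perm_sum s (I : Type) (rr : seq I) (P : pred I) (F : I -> tensB A d r) :
  slot_perm s (\sum_(i <- rr | P i) F i) = \sum_(i <- rr | P i) slot_perm s (F i).
Proof. exact: (big_morph _ (slot_permD s) (slot_perm0 s)). Qed.

Lemma sym_coef (p : tensB A d r) s m :
  symmetric_tensor p -> p@_(pm s m) = p@_m.
Proof.
move=> /(_ (s^-1)%g) H; rewrite -{1}H {1}(mpolyE p).
rewrite slot_perm_sum [in RHS](mpolyE p) !raddf_sum /=.
apply: eq_bigr=> m' _.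
rewrite -mul_mpolyC slot_permM slot_permC slot_permX invgK.
rewrite !mcoeffCM !mcoeffX; congr (_ * _%:R).
by rewrite (inj_eq (can_inj (pmK s))).
Qed.

End Perm.
Section Shift.
Variables (n r : nat).
Local Notation d := n.+1.
Local Notation N := (nvar d r).

Definition insf (p j : nat) : nat := if (j < p)%N then j else if j == p then n else j.-1.
Definition delf (p j : nat) : nat := if (j < p)%N then j else if j == n then p else j.+1.

Lemma insf_le p j : (j <= n)%N -> (insf p j <= n)%N.
Proof. rewrite /insf; (repeat case: ifP); move=> *; lia. Qed.
Lemma delf_le p j : (j <= n)%N -> (delf p j <= n)%N.
Proof. rewrite /delf; (repeat case: ifP); move=> *; lia. Qed.
Lemma insfK p j : (j <= n)%N -> delf p (insf p j) = j.
Proof. rewrite /insf /delf; (repeat case: ifP); move=> *; lia. Qed.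
Lemma delfK p j : (j <= n)%N -> insf p (delf p j) = j.
Proof. rewrite /insf /delf; (repeat case: ifP); move=> *; lia. Qed.

Definition insO p (j : 'I_d) : 'I_d := inord (insf p j).
Definition delO p (j : 'I_d) : 'I_d := inord (delf p j).
Lemma insOK p : cancel (insO p) (delO p).
Proof.
move=> j; have jn : (j <= n)%N := ltn_ord j.
have h1 : (insf p j <= n)%N := insf_le p jn.
by apply: val_inj; rewrite /insO /delO /= !inordK // insfK.
Qed.
Lemma delOK p : cancel (delO p) (insO p).
Proof.
move=> j; have jn : (j <= n)%N := ltn_ord j.
have h1 : (delf p j <= n)%N := delf_le p jn.
by apply: val_inj; rewrite /insO /delO /= !inordK // delfK.
Qed.

Definition ins p : 'S_d := perm (can_inj (insOK p)).
Definition del p : 'S_d := perm (can_inj (delOK p)).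

Definition S (m : 'X_{1..N}) (j : nat) : 'X_{1..r} := sl m (inord j).

Lemma S_ins m p j : (j <= n)%N -> S (pm (ins p) m) j = S m (insf p j).
Proof. by move=> le; rewrite /S sl_pm permE /insO inordK. Qed.
Lemma S_del m p j : (j <= n)%N -> S (pm (del p) m) j = S m (delf p j).
Proof. by move=> le; rewrite /S sl_pm permE /delO inordK. Qed.

Lemma S_sl m (j : 'I_d) : S m j = sl m j.
Proof. by rewrite /S inord_val. Qed.

Lemma SD m1 m2 j : S (m1 + m2) j = (S m1 j + S m2 j)%MM.
Proof. exact: slD. Qed.

Lemma S_inj m1 m2 : (forall j, (j <= n)%N -> S m1 j = S m2 j) -> m1 = m2.
Proof. move=> H; apply: sl_inj=> j; rewrite -!S_sl; apply: H; exact: (ltn_ord j). Qed.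

End Shift.
Section Functional.
Variables (A : comNzRingType) (n r k : nat) (alpha : 'X_{1..r}) (i0 : 'I_r).
Local Notation d := n.+1.
Local Notation N := (nvar d r).
Local Notation ka := (mscale k alpha).
Local Notation b := (mdeg ka).+1.

Definition sgl (m : 'X_{1..N}) : nat := #|[pred j : 'I_d | sl m j != 0%MM]|.
Definition pref (m : 'X_{1..N}) : bool :=
  [forall j : 'I_d, (sl m j != 0%MM) == (j < sgl m)%N].
Definition th (be : 'X_{1..r}) : A := (be i0)%:R.
Definition okm (m : 'X_{1..N}) : bool := (tmdeg m == ka) && pref m.
Definition cw (m : 'X_{1..N}) : A :=
  if okm m then (-1) ^+ (sgl m) * th (sl m ord0) else 0.
Definition LL (f : tensB A d r) : A :=
  \sum_(m : 'X_{1..N < b}) f@_m * cw m.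

Lemma thD be ga : th (be + ga)%MM = th be + th ga.
Proof. by rewrite /th mnmDE natrD. Qed.

Lemma LL_add f g : LL (f + g) = LL f + LL g.
Proof. by rewrite /LL -big_split; apply: eq_bigr=> m _; rewrite mcoeffD mulrDl. Qed.

Lemma LL0 : LL 0 = 0.
Proof. by rewrite /LL big1 // => m _; rewrite mcoeff0 mul0r. Qed.

Lemma LL_sum (I : Type) (rr : seq I) (P : pred I) (F : I -> tensB A d r) :
  LL (\sum_(i <- rr | P i) F i) = \sum_(i <- rr | P i) LL (F i).
Proof. exact: (big_morph _ LL_add LL0). Qed.

Lemma LL_CM a f : LL (a%:MP * f) = a * LL f.
Proof. by rewrite /LL mulr_sumr; apply: eq_bigr=> m _; rewrite mcoeffCM mulrA. Qed.

Lemma LL_Z a f : LL (a *: f) = a * LL f.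
Proof. by rewrite -mul_mpolyC LL_CM. Qed.

Lemma cw_deg m : cw m != 0 -> tmdeg m = ka.
Proof. by rewrite /cw /okm; case: (tmdeg m =P ka) => //=; rewrite eqxx. Qed.

Lemma LL_X m : LL 'X_[m] = cw m.
Proof.
have [/cw_deg tm|/negPn/eqP cm0] := boolP (cw m != 0); last first.
  rewrite cm0 /LL big1 // => m' _; rewrite mcoeffX; case: eqP=> [e|]; last by rewrite mul0r.
  by rewrite -e cm0 mulr0.
have hb : (mdeg m < b)%N by rewrite -(@mdeg_tmdeg n) tm.
rewrite /LL (bigD1 (BMultinom hb)) //= mcoeffX eqxx mul1r big1 ?addr0 // => m' ne.
rewrite mcoeffX; case: eqP=> [e|]; rewrite ?mul0r //.
have em : m' = BMultinom hb by apply/val_inj; rewrite /= -e.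
by rewrite em eqxx in ne.
Qed.

Lemma mscaleE : ka = (alpha *+ k)%MM.
Proof. by apply/mnmP=> i; rewrite mnmE mulmnE mulnC. Qed.

Lemma mdeg_ka : mdeg ka = (k * mdeg alpha)%N.
Proof. by rewrite mscaleE mdegMn mulnC. Qed.

Lemma cw0 : (0 < k)%N -> alpha != 0%MM -> cw 0%MM = 0.
Proof.
move=> k0 a0; apply/eqP; apply: contraT=> /cw_deg /(congr1 mdeg).
rewrite (@mdeg_tmdeg n) mdeg0 mdeg_ka => /esym/eqP; rewrite muln_eq0 mdeg_eq0.
by rewrite (negbTE a0) orbF; case: k k0.
Qed.

Lemma LL_C a : (0 < k)%N -> alpha != 0%MM -> LL a%:MP = 0.
Proof.
move=> k0 a0; rewrite /LL big1 // => m _; rewrite mcoeffC.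
by case: eqP=> [->|]; rewrite ?cw0 ?mulr0 ?mul0r.
Qed.

Lemma LL_gen (p : tensB A d r) be :
  thomog be p -> mlt be ka -> LL p = 0.
Proof.
move=> hp /andP[_ ne]; rewrite /LL big1 // => m _.
have [->|nz] := eqVneq p@_m 0; first by rewrite mul0r.
have [cm|/cw_deg tm] := eqVneq (cw m) 0; first by rewrite cm mulr0.
by move: ne; rewrite -(hp m) ?tm ?eqxx // mcoeff_msupp.
Qed.

Lemma LL_M (u v : tensB A d r) K :
  (msize u <= K)%N -> (msize v <= K)%N ->
  LL (u * v) = \sum_(mm : 'X_{1..N < K, K}) u@_mm.1 * v@_mm.2 * cw (mm.1 + mm.2)%MM.
Proof.
move=> hu hv; rewrite (mpolywME hu hv) LL_sum; apply: eq_bigr=> mm _.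
by rewrite LL_Z LL_X.
Qed.

End Functional.
Lemma card_lt (d l : nat) : (l <= d)%N -> #|[pred j : 'I_d | (j < l)%N]| = l.
Proof.
move=> ld; rewrite cardE /enum_mem size_filter -enumT.
rewrite (@eq_count _ _ (preim val (fun j => (j < l)%N))) //.
rewrite -count_map val_enum_ord.
rewrite -(subnKC ld) iotaD count_cat add0n.
rewrite (@eq_in_count _ _ predT); last first.
  by move=> x; rewrite mem_iota add0n; case/andP.
rewrite count_predT size_iota (@eq_in_count _ _ pred0) ?count_pred0 ?addn0 //.
by move=> x; rewrite mem_iota; case/andP=> lx _ /=; rewrite ltnNge lx.
Qed.
Section Helpers.
Variables (n r : nat).
Local Notation d := n.+1.
Local Notation N := (nvar d r).

Lemma S_ord0 (m : 'X_{1..N}) : S m 0 = sl m ord0.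
Proof. exact: (S_sl m ord0). Qed.

Lemma prefP (m : 'X_{1..N}) : pref m ->
  forall j, (j <= n)%N -> (S m j != 0%MM) = (j < sgl m)%N.
Proof.
move=> /forallP H j jn; have := H (inord j); rewrite -/(S m j) inordK //.
by move/eqP.
Qed.

Lemma sgl_le (m : 'X_{1..N}) : (sgl m <= d)%N.
Proof. by rewrite /sgl (leq_trans (max_card _)) ?card_ord. Qed.

Lemma prefI (m : 'X_{1..N}) l :
  (forall j, (j <= n)%N -> (S m j != 0%MM) = (j < l)%N) -> (l <= d)%N ->
  pref m /\ sgl m = l.
Proof.
move=> H ld.
have E : sgl m = l.
  rewrite /sgl -(card_lt ld); apply: eq_card=> j; rewrite !inE /=.
  by rewrite -S_sl H //; exact: (ltn_ord j).
split=> //; apply/forallP=> j; rewrite E -S_sl H //.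
exact: (ltn_ord j).
Qed.

Lemma S_eq0 (m : 'X_{1..N}) : (forall j, (j <= n)%N -> S m j = 0%MM) -> m = 0%MM.
Proof. by move=> H; apply: sl_eq0 => j; rewrite -S_sl H //; exact: (ltn_ord j). Qed.

Definition hh (m : 'X_{1..N}) : nat := find (fun j => S m j != 0%MM) (iota 0 d).

Lemma hhP (m : 'X_{1..N}) : m != 0%MM ->
  [/\ (hh m <= n)%N, S m (hh m) != 0%MM & forall j, (j < hh m)%N -> S m j = 0%MM].
Proof.
move=> nz.
have hs : has (fun j => S m j != 0%MM) (iota 0 d).
  apply/negPn/negP=> /hasPn H; move/eqP: nz; apply; apply: S_eq0=> j jn.
  by apply/eqP/negPn; apply: H; rewrite mem_iota.
have := hs; rewrite has_find size_iota => hlt.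
split=> //.
  by have := nth_find 0 hs; rewrite nth_iota.
move=> j jh; have := before_find 0 jh; rewrite nth_iota ?add0n; last first.
  exact: (ltn_trans jh hlt).
by move/negbFE/eqP.
Qed.

Lemma hh_eq (m : 'X_{1..N}) h : (h <= n)%N -> S m h != 0%MM ->
  (forall j, (j < h)%N -> S m j = 0%MM) -> hh m = h.
Proof.
move=> hn nz H.
have mnz : m != 0%MM by apply: contraNneq nz=> ->; rewrite /S sl0.
have [h1 h2 h3] := hhP mnz.
case: (ltngtP (hh m) h)=> // c.
  by move: h2; rewrite H ?eqxx.
by move: nz; rewrite h3 ?eqxx.
Qed.

Lemma pm_delK p (m : 'X_{1..N}) : pm (del n p) (pm (ins n p) m) = m.
Proof.
apply: S_inj=> j jn; rewrite S_del // S_ins ?delfK //.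
exact: delf_le.
Qed.

Lemma pm_insK p (m : 'X_{1..N}) : pm (ins n p) (pm (del n p) m) = m.
Proof.
apply: S_inj=> j jn; rewrite S_ins // S_del ?insfK //.
exact: insf_le.
Qed.

Lemma tmdegD (m1 m2 : 'X_{1..N}) : tmdeg (m1 + m2) = (tmdeg m1 + tmdeg m2)%MM.
Proof. by rewrite !tmdegE -big_split; apply: eq_bigr=> j _; rewrite slD. Qed.

Lemma SD0 (m1 m2 : 'X_{1..N}) j :
  (S (m1 + m2) j != 0%MM) = (S m1 j != 0%MM) || (S m2 j != 0%MM).
Proof. by rewrite SD mnmD_eq0 negb_and. Qed.

End Helpers.
Ltac insfc := rewrite /insf /delf; (repeat case: ifP); move=> *; lia.

Section SlotsBD.
Variables (n r : nat).
Local Notation d := n.+1.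
Local Notation N := (nvar d r).

Lemma B_slots (m1 m2 : 'X_{1..N}) l h :
  (l <= n)%N ->
  (forall j, (j <= n)%N -> (S (m1+m2) j != 0%MM) = (j < l)%N) ->
  (h < l)%N -> S m1 h != 0%MM -> S m2 h != 0%MM ->
  (forall j, (j < h)%N -> S m2 j = 0%MM) ->
  [/\ forall j, (j <= n)%N ->
        (S (pm (ins n h.+1) m1 + pm (ins n h) m2) j != 0%MM) = (j < l.+1)%N,
      hh (pm (ins n h) m2) = h.+1,
      S (pm (ins n h.+1) m1) h.+1 = 0%MM &
      S (pm (ins n h.+1) m1) 0 = S m1 0].
Proof.
move=> ln H hl n1 n2 z2.
have hn : (h <= n)%N by lia.
have := H n (leqnn n); rewrite SD0 ltnNge ln /= => /norP[/negPn/eqP e1 /negPn/eqP e2].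
split.
- move=> j jn; rewrite SD0 !S_ins //.
  case: (ltngtP j h)=> [jh|hj|->].
  + have -> : insf n h.+1 j = j by insfc.
    have -> : insf n h j = j by insfc.
    rewrite -SD0 H //; lia.
  + case: (ltngtP j h.+1)=> [|hj2|->]; first by lia.
    * have -> : insf n h.+1 j = j.-1 by insfc.
      have -> : insf n h j = j.-1 by insfc.
      rewrite -SD0 H; lia.
    * have -> : insf n h.+1 h.+1 = n by insfc.
      have -> : insf n h h.+1 = h by insfc.
      rewrite e1 n2 orbT; lia.
  + have -> : insf n h.+1 h = h by insfc.
    have -> : insf n h h = n by insfc.
    rewrite n1; lia.
- apply: hh_eq.
  + lia.
  + rewrite S_ins; last by lia.
    by have -> : insf n h h.+1 = h by insfc.
  + move=> j jh; rewrite S_ins; last by lia.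
    case: (ltngtP j h)=> [jh2|hj|->].
    * have -> : insf n h j = j by insfc.
      by rewrite z2.
    * by lia.
    * by have -> : insf n h h = n by insfc.
- rewrite S_ins; last by lia.
  by have -> : insf n h.+1 h.+1 = n by insfc.
- by rewrite S_ins.
Qed.

Lemma D_slots (m1 m2 : 'X_{1..N}) l h :
  (l <= d)%N ->
  (forall j, (j <= n)%N -> (S (m1+m2) j != 0%MM) = (j < l)%N) ->
  (0 < h)%N -> (h < l)%N -> S m1 h = 0%MM -> S m2 h != 0%MM ->
  (forall j, (j < h)%N -> S m2 j = 0%MM) ->
  [/\ forall j, (j <= n)%N ->
        (S (pm (del n h) m1 + pm (del n h.-1) m2) j != 0%MM) = (j < l.-1)%N,
      hh (pm (del n h.-1) m2) = h.-1,
      S (pm (del n h) m1) h.-1 != 0%MM &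
      S (pm (del n h) m1) 0 = S m1 0].
Proof.
move=> ld H h0 hl z1 n2 z2.
have hn : (h <= n)%N by lia.
have n1 : S m1 h.-1 != 0%MM.
  have := H h.-1 ltac:(lia); rewrite SD0 z2 ?eqxx ?orbF; last by lia.
  by move=> ->; lia.
split.
- move=> j jn; rewrite SD0 !S_del //.
  case: (ltngtP j h.-1)=> [jh|hj|->].
  + have -> : delf n h j = j by insfc.
    have -> : delf n h.-1 j = j by insfc.
    rewrite -SD0 H //; lia.
  + case: (ltngtP j n)=> [jn2||->]; last 2 first.
    * by lia.
    * have -> : delf n h n = h by insfc.
      have -> : delf n h.-1 n = h.-1 by insfc.
      rewrite z1 z2 ?eqxx /=; lia.
    have -> : delf n h j = j.+1 by insfc.
    have -> : delf n h.-1 j = j.+1 by insfc.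
    rewrite -SD0 H; lia.
  + have -> : delf n h h.-1 = h.-1 by insfc.
    have -> : delf n h.-1 h.-1 = h by insfc.
    rewrite n2 orbT; lia.
- apply: hh_eq.
  + lia.
  + rewrite S_del; last by lia.
    by have -> : delf n h.-1 h.-1 = h by insfc.
  + move=> j jh; rewrite S_del; last by lia.
    have -> : delf n h.-1 j = j by insfc.
    by rewrite z2 //; lia.
- rewrite S_del; last by lia.
  by have -> : delf n h h.-1 = h.-1 by insfc.
- rewrite S_del //.
  by have -> : delf n h 0 = 0 by insfc.
Qed.

End SlotsBD.
Section Spec.
Variables (n r k : nat) (alpha : 'X_{1..r}).
Local Notation d := n.+1.
Local Notation N := (nvar d r).
Local Notation ka := (mscale k alpha).
Hypothesis hk : (k * mdeg alpha <= d)%N.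

Lemma len_lt (m1 m2 : 'X_{1..N}) h :
  tmdeg (m1 + m2) = ka -> pref (m1 + m2) -> (h <= n)%N ->
  S m1 h != 0%MM -> S m2 h != 0%MM -> (sgl (m1 + m2) <= n)%N.
Proof.
move=> tm pr hn n1 n2; rewrite leqNgt; apply/negP=> lt.
have all_nz : forall j : 'I_d, (1 <= mdeg (sl (m1 + m2) j))%N.
  move=> j; rewrite lt0n mdeg_eq0 -S_sl prefP //; last exact: (ltn_ord j).
  by have := ltn_ord j; lia.
have e : mdeg (m1 + m2) = mdeg ka by rewrite -tm (@mdeg_tmdeg n).
move: e; rewrite (@mdeg_sl n) mdeg_ka (bigD1 (inord h)) //=.
have h2 : (2 <= mdeg (sl (m1 + m2) (inord h)))%N.
  rewrite -/(S _ h) SD mdegD.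
  by move: n1 n2; rewrite -!mdeg_eq0; lia.
have h3 : (\sum_(j < d | j != inord h) 1 <= \sum_(j < d | j != inord h) mdeg (sl (m1 + m2) j))%N.
  by apply: leq_sum=> j _; apply: all_nz.
have h4 : (\sum_(j < d) 1 = 1 + \sum_(j < d | j != inord h) 1)%N by rewrite (bigD1 (inord h)).
rewrite sum1_card card_ord in h4.
move=> e; have := leq_add h2 h3; rewrite e.
move: hk; set K1 := (k * mdeg alpha)%N; set S1 := (\sum_(j < d | _) 1)%N in h4 *.
lia.
Qed.

Lemma phiB_spec (m1 m2 : 'X_{1..N}) :
  okm k alpha (m1 + m2) -> sl m1 ord0 != 0%MM -> m2 != 0%MM -> S m1 (hh m2) != 0%MM ->
  let h := hh m2 in
  let m1' := pm (ins n h.+1) m1 in let m2' := pm (ins n h) m2 in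
  [/\ okm k alpha (m1' + m2'), sl m1' ord0 != 0%MM, m2' != 0%MM, hh m2' = h.+1 &
      [/\ S m1' (hh m2') = 0%MM, sgl (m1' + m2') = (sgl (m1 + m2)).+1 &
      sl m1' ord0 = sl m1 ord0]].
Proof.
move=> /andP[/eqP tm pr] s0 nz B h m1' m2'.
have [hn n2 z2] := hhP nz.
have pre := prefP pr.
have hl : (h < sgl (m1 + m2))%N by rewrite -pre // SD0 n2 orbT.
have ln : (sgl (m1 + m2) <= n)%N by apply: (len_lt tm pr hn).
have [P1 P2 P3 P4] := B_slots ln pre hl B n2 z2.
have [pr' sg'] := prefI P1 ln.
have tm' : tmdeg (m1' + m2') = ka by rewrite tmdegD !tmdeg_pm -tmdegD.
have e0 : sl m1' ord0 = sl m1 ord0 by rewrite -!S_ord0 P4.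
split=> //.
- by rewrite /okm tm' eqxx pr'.
- by rewrite e0.
- apply/negP=> /eqP e; move: P2; rewrite -/m2' e /hh hasNfind ?size_iota; first by lia.
  by apply/hasPn=> j _; rewrite /S sl0 eqxx.
- by split=> //; rewrite P2.
Qed.

Lemma phiD_spec (m1 m2 : 'X_{1..N}) :
  okm k alpha (m1 + m2) -> sl m1 ord0 != 0%MM -> m2 != 0%MM -> S m1 (hh m2) = 0%MM ->
  let h := hh m2 in
  let m1' := pm (del n h) m1 in let m2' := pm (del n h.-1) m2 in
  [/\ okm k alpha (m1' + m2'), sl m1' ord0 != 0%MM, m2' != 0%MM, hh m2' = h.-1 &
      [/\ S m1' (hh m2') != 0%MM, (0 < h)%N & sl m1' ord0 = sl m1 ord0]].
Proof.
move=> /andP[/eqP tm pr] s0 nz D h m1' m2'.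
have [hn n2 z2] := hhP nz.
have pre := prefP pr.
have hl : (h < sgl (m1 + m2))%N by rewrite -pre // SD0 n2 orbT.
have h0 : (0 < h)%N.
  by rewrite lt0n; apply: contra_neq s0=> e; rewrite -S_ord0 -e -/h D.
have [P1 P2 P3 P4] := D_slots (sgl_le (m1 + m2)) pre h0 hl D n2 z2.
have [pr' sg'] := prefI P1 ltac:(have := sgl_le (m1 + m2); lia).
have tm' : tmdeg (m1' + m2') = ka by rewrite tmdegD !tmdeg_pm -tmdegD.
have e0 : sl m1' ord0 = sl m1 ord0 by rewrite -!S_ord0 P4.
split=> //.
- by rewrite /okm tm' eqxx pr'.
- by rewrite e0.
- apply/negP=> /eqP e; move: P2; rewrite -/m2' e /hh hasNfind ?size_iota; first by lia.
  by apply/hasPn=> j _; rewrite /S sl0 eqxx.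
- by split=> //; rewrite P2.
Qed.

End Spec.
Section Core.
Variables (A : comNzRingType) (n r k : nat) (alpha : 'X_{1..r}) (i0 : 'I_r).
Local Notation d := n.+1.
Local Notation N := (nvar d r).
Hypothesis hk : (k * mdeg alpha <= d)%N.
Variables (u v : tensB A d r) (K : nat).
Hypotheses (su : symmetric_tensor u) (sv : symmetric_tensor v) (v0 : v@_0%MM = 0).

Local Notation T := ('X_{1..N < K, K})%type.

Definition Wt (mm : T) : A :=
  u@_mm.1 * v@_mm.2 *
  (if okm k alpha (mm.1 + mm.2)%MM
   then (-1) ^+ sgl (mm.1 + mm.2)%MM * th A i0 (sl mm.1 ord0) else 0).

Definition Good (mm : T) : bool :=
  [&& okm k alpha (mm.1 + mm.2)%MM, sl mm.1 ord0 != 0%MM & bmnm mm.2 != 0%MM].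

Definition phiB (mm : T) : T :=
  (insubd mm.1 (pm (ins n (hh mm.2).+1) mm.1), insubd mm.2 (pm (ins n (hh mm.2)) mm.2)).
Definition phiD (mm : T) : T :=
  (insubd mm.1 (pm (del n (hh mm.2)) mm.1), insubd mm.2 (pm (del n (hh mm.2).-1) mm.2)).

Lemma val_pm (x : 'X_{1..N < K}) s : bmnm (insubd x (pm s x)) = pm s x.
Proof. by rewrite insubdK // unfold_in /= mdeg_pm bmdeg. Qed.

Lemma Wt0 mm : ~~ Good mm -> Wt mm = 0.
Proof.
move=> nG; rewrite /Wt; case ok: okm; last by rewrite mulr0.
have [e|ne] := eqVneq (sl mm.1 ord0) 0%MM; first by rewrite e /th mnm0E mulr0 mulr0.
have e2 : bmnm mm.2 = 0%MM by apply/eqP; move: nG; rewrite /Good ok ne /= negbK.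
by rewrite e2 v0 mulr0 mul0r.
Qed.

Lemma Bmap y : Good y -> S y.1 (hh y.2) != 0%MM ->
  [&& Good (phiB y), S (phiB y).1 (hh (phiB y).2) == 0%MM & phiD (phiB y) == y]
  /\ Wt (phiB y) = - Wt y.
Proof.
case: y=> y1 y2 /=; case/and3P=> /= ok s0 nz B.
have [ok' s0' nz' hh' [S' sg' e0]] := phiB_spec hk ok s0 nz B.
rewrite /phiB /Good /Wt /= !val_pm ok' ok sg' exprS e0.
rewrite !sym_coef //.
split; last by rewrite !mulN1r !mulNr mulrN.
apply/and3P; split.
- by apply/and3P; split.
- by rewrite S'.
- apply/eqP; rewrite /phiD /= [bmnm (insubd y2 _)]val_pm [bmnm (insubd y1 _)]val_pm.
  by rewrite hh' /= !pm_delK !valKd.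
Qed.

Lemma Dmap x : Good x -> ~~ (S x.1 (hh x.2) != 0%MM) ->
  [&& Good (phiD x), S (phiD x).1 (hh (phiD x).2) != 0%MM & phiB (phiD x) == x].
Proof.
case: x=> y1 y2 /=; case/and3P=> /= ok s0 nz /negPn/eqP D.
have [ok' s0' nz' hh' [S' h0 e0]] := phiD_spec hk ok s0 nz D.
rewrite /phiD /Good /= [bmnm (insubd y2 _)]val_pm [bmnm (insubd y1 _)]val_pm ok'.
apply/and3P; split.
- by apply/and3P; split.
- by [].
- apply/eqP; rewrite /phiB /= [bmnm (insubd y2 _)]val_pm [bmnm (insubd y1 _)]val_pm.
  by rewrite hh' (prednK h0) !pm_insK !valKd.
Qed.

Lemma core_sum : \sum_(mm : T) Wt mm = 0.
Proof.
rewrite (bigID Good) /= [X in _ + X]big1 ?addr0; last by move=> mm /Wt0.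
rewrite (bigID (fun mm : T => S mm.1 (hh mm.2) != 0%MM)) /=.
rewrite [X in _ + X](reindex_onto phiB phiD) /=; last first.
  by move=> x /andP[G D]; have /and3P[_ _ /eqP] := Dmap G D.
rewrite [X in _ + X](eq_big (fun j : T => Good j && (S j.1 (hh j.2) != 0%MM)) (fun j : T => - Wt j)).
- by rewrite sumrN subrr.
- move=> j; apply/idP/idP.
  + case/andP=> /andP[G D] /eqP E.
    by have /and3P[G' B' _] := Dmap G D; rewrite E in G' B'; rewrite G' B'.
  + case/andP=> G B; have [/and3P[G' D' E'] _] := Bmap G B.
    by rewrite G' D' E'.
- move=> j /andP[/andP[G D] /eqP E].
  have /and3P[G' B' _] := Dmap G D; rewrite E in G' B'.
  by have [_ ->] := Bmap G' B'.
Qed.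

End Core.
Section Mul.
Variables (A : comNzRingType) (n r k : nat) (alpha : 'X_{1..r}) (i0 : 'I_r).
Local Notation d := n.+1.
Local Notation N := (nvar d r).
Hypothesis hk : (k * mdeg alpha <= d)%N.

Lemma LL_mul0 (u v : tensB A d r) :
  symmetric_tensor u -> symmetric_tensor v -> u@_0%MM = 0 -> v@_0%MM = 0 ->
  LL k alpha i0 (u * v) = 0.
Proof.
move=> su sv u0 v0.
pose K := maxn (msize u) (msize v).
rewrite (LL_M k alpha i0 (K := K)) ?leq_maxl ?leq_maxr //.
have E : forall mm : 'X_{1..N < K, K},
  u@_mm.1 * v@_mm.2 * cw A k alpha i0 (mm.1 + mm.2)%MM =
  Wt k alpha i0 u v mm + Wt k alpha i0 v u (mm.2, mm.1).
  move=> [m1 m2] /=; rewrite /Wt /cw /= [(bmnm m2 + _)%MM]addmC.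
  case: okm; last by rewrite !mulr0 addr0.
  by rewrite slD thD mulrDr mulrDr [v@_m2 * _]mulrC.
rewrite (eq_bigr _ (fun mm _ => E mm)) big_split /=.
rewrite (core_sum i0 hk K su sv v0) add0r.
have inj : injective (fun mm : 'X_{1..N < K, K} => (mm.2, mm.1)).
  by move=> [a1 b1] [a2 b2] /= [-> ->].
rewrite (reindex_inj inj) /=.
exact: (core_sum i0 hk K sv su u0).
Qed.

End Mul.
Section Inv.
Variables (A : comNzRingType) (n r k : nat) (alpha : 'X_{1..r}) (i0 : 'I_r).
Local Notation d := n.+1.
Local Notation N := (nvar d r).
Hypotheses (hk : (k * mdeg alpha <= d)%N) (k0 : (0 < k)%N) (a0 : alpha != 0%MM).

Lemma slot_permB s (p q : tensB A d r) :
  slot_perm s (p - q) = slot_perm s p - slot_perm s q.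
Proof. exact: mmapB. Qed.

Lemma LL_B (f g : tensB A d r) : LL k alpha i0 (f - g) = LL k alpha i0 f - LL k alpha i0 g.
Proof.
have := LL_add k alpha i0 (f - g) g; rewrite subrK => ->.
by rewrite addrK.
Qed.

Lemma symC (a : A) : symmetric_tensor (a%:MP : tensB A d r).
Proof. by move=> s; rewrite slot_permC. Qed.

Lemma inv_gamma (f : tensB A d r) :
  Gamma_lt (mscale k alpha) f -> symmetric_tensor f /\ LL k alpha i0 f = 0.
Proof.
elim=> {f}.
- by move=> a; split; [exact: symC | exact: LL_C].
- by move=> p [sp [be [hp mb]]]; split=> //; apply: (LL_gen _ hp mb).
- move=> p q _ [sp Lp] _ [sq Lq]; split; first by move=> s; rewrite slot_permD sp sq.
  by rewrite LL_add Lp Lq addr0.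
- move=> p q _ [sp Lp] _ [sq Lq]; split; first by move=> s; rewrite slot_permM sp sq.
  set p0 := p@_0%MM; set q0 := q@_0%MM.
  have ep : p = p0%:MP + (p - p0%:MP) by rewrite addrC subrK.
  have eq : q = q0%:MP + (q - q0%:MP) by rewrite addrC subrK.
  have sp' : symmetric_tensor (p - p0%:MP) by move=> s; rewrite slot_permB sp slot_permC.
  have sq' : symmetric_tensor (q - q0%:MP) by move=> s; rewrite slot_permB sq slot_permC.
  have zp : (p - p0%:MP)@_0%MM = 0 by rewrite mcoeffB mcoeffC eqxx mulr1 subrr.
  have zq : (q - q0%:MP)@_0%MM = 0 by rewrite mcoeffB mcoeffC eqxx mulr1 subrr.
  have Lp' : LL k alpha i0 (p - p0%:MP) = 0 by rewrite LL_B Lp LL_C // subrr.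
  have Lq' : LL k alpha i0 (q - q0%:MP) = 0 by rewrite LL_B Lq LL_C // subrr.
  move: ep eq sp' sq' zp zq Lp' Lq'.
  move: (p - p0%:MP) (q - q0%:MP)=> P' Q' -> -> sp' sq' zp zq Lp' Lq'.
  rewrite mulrDl !mulrDr !LL_add.
  rewrite -rmorphM /= LL_C // LL_CM Lq' mulr0 [P' * _]mulrC LL_CM Lp' mulr0.
  by rewrite (LL_mul0 i0 hk sp' sq' zp zq) !addr0.
Qed.

End Inv.
Section Gam.
Variables (A : comNzRingType) (n r k : nat) (alpha : 'X_{1..r}) (i0 : 'I_r).
Local Notation d := n.+1.
Local Notation N := (nvar d r).
Hypotheses (hk : (k * mdeg alpha <= d)%N) (k0 : (0 < k)%N) (a0 : alpha != 0%MM).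

Lemma X_mk (F : 'I_d -> 'X_{1..r}) :
  ('X_[mk F] : tensB A d r) = \prod_(j < d) \prod_(i < r) tvar A j i ^+ (F j i).
Proof.
rewrite mpolyXE_id (reindex (@enum_rank ('I_d * 'I_r)%type)) /=; last first.
  by exists enum_val=> x _; rewrite ?enum_rankK ?enum_valK.
rewrite [RHS]pair_bigA /=.
by apply: eq_bigr=> -[j i] _; rewrite mnmE enum_rankK.
Qed.

Definition FS (Sx : {set 'I_d}) (j : 'I_d) : 'X_{1..r} := if j \in Sx then alpha else 0%MM.

Lemma gamma_prodE :
  @gamma_prod A d r k alpha = \sum_(Sx : {set 'I_d} | #|Sx| == k) 'X_[mk (FS Sx)].
Proof.
apply: eq_bigr=> Sx _; rewrite X_mk (big_mkcond (fun j => j \in Sx)) /=.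
apply: eq_bigr=> j _; rewrite /FS; case: ifP=> // _.
by rewrite big1 // => i _; rewrite mnm0E expr0.
Qed.

Lemma FS_nz (Sx : {set 'I_d}) (j : 'I_d) : (FS Sx j != 0%MM) = (j \in Sx).
Proof. by rewrite /FS; case: ifP=> //; rewrite eqxx. Qed.

Lemma cw_FS (Sx : {set 'I_d}) : #|Sx| = k ->
  cw A k alpha i0 (mk (FS Sx)) =
  if Sx == [set j : 'I_d | (j < k)%N] then (-1) ^+ k * (alpha i0)%:R else 0.
Proof.
move=> cS.
have sg : sgl (mk (FS Sx)) = k.
  by rewrite /sgl -cS; apply: eq_card=> j; rewrite inE /= sl_mk FS_nz.
have tm : tmdeg (mk (FS Sx)) = mscale k alpha.
  rewrite tmdegE; apply/mnmP=> i; rewrite mnm_sumE mnmE.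
  rewrite (eq_bigr (fun j => if j \in Sx then alpha i else 0%N)); last first.
    by move=> j _; rewrite sl_mk /FS; case: ifP=> //; rewrite mnm0E.
  by rewrite -big_mkcond /= sum_nat_const cS.
rewrite /cw /okm tm eqxx /= sg.
have -> : pref (mk (FS Sx)) = (Sx == [set j : 'I_d | (j < k)%N]).
  apply/idP/eqP.
  - move=> /forallP H; apply/setP=> j; rewrite inE -FS_nz -(sl_mk (FS Sx)).
    by have /eqP := H j; rewrite sg.
  - move=> eS; apply/forallP=> j; rewrite sg sl_mk FS_nz eS inE.
    by [].
case: eqP=> // ->; rewrite sl_mk /FS inE /=.
by rewrite k0.
Qed.

Lemma LL_gamma :
  LL k alpha i0 (@gamma_prod A d r k alpha) = (-1) ^+ k * (alpha i0)%:R.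
Proof.
have kd : (k <= d)%N.
  apply: leq_trans hk; rewrite leq_pmulr // lt0n mdeg_eq0 //.
rewrite gamma_prodE LL_sum.
rewrite (bigD1 [set j : 'I_d | (j < k)%N]) /=; last by rewrite cardsE card_lt.
rewrite LL_X cw_FS ?eqxx ?cardsE ?card_lt // big1 ?addr0 // => Sx /andP[/eqP cS ne].
by rewrite LL_X cw_FS // (negbTE ne).
Qed.

End Gam.
Lemma gcd_natr0 (A : comNzRingType) (r : nat) (alpha : 'X_{1..r}) :
  (forall i, (alpha i)%:R = 0 :> A) -> (\big[gcdn/0%N]_(i < r) alpha i)%:R = 0 :> A.
Proof.
move=> H; apply: (big_ind (fun x : nat => x%:R = 0 :> A))=> //.
move=> a b Ha Hb; have [->|a0] := posnP a; first by rewrite gcd0n.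
case: (egcdnP b a0)=> km kn E _.
have := congr1 (fun x : nat => x%:R : A) E; rewrite /= !natrD !natrM Ha Hb !mulr0.
by rewrite add0r => <-.
Qed.

Unset Implicit Arguments.

Theorem corollary7p14 (A : comNzRingType) (r d k : nat) (alpha : 'X_{1..r}) :
  (1 <= r)%N -> (1 <= d)%N -> (1 <= k)%N ->
  alpha != 0%MM ->
  (exists u : A, u * (\big[gcdn/0%N]_(i < r) alpha i)%:R = 1) ->
  (k * mdeg alpha <= d)%N ->
  ~ Gamma_lt (mscale k alpha) (@gamma_prod A d r k alpha).
Proof.
move=> r1 d1 k1 a0 [u hu] hk hG.
have [i0 hi0|H] := pickP (fun i : 'I_r => (alpha i)%:R != 0 :> A); last first.
  move: hu; rewrite gcd_natr0 ?mulr0 => [/eqP|i]; first by rewrite eq_sym oner_eq0.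
  by have := H i => /negbFE/eqP.
case: d d1 hk hG => // n _ hk hG.
have [_ L] := inv_gamma i0 hk k1 a0 hG.
move: L; rewrite LL_gamma // -signr_odd mulr_sign.
by case: ifP=> _ /eqP; rewrite ?oppr_eq0 (negbTE hi0).
Qed.
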